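(* For every $q\in(0,1)$ there exists an $S$-gap shift which has the specification property and has entropy $q$.
   Context: For a nonempty set $S\subseteq\{0,1,2,\dots\}$, the $S$-gap shift $X(S)\subseteq\{0,1\}^{\mathbb{Z}}$ is the set of bi-infinite binary sequences in which the number of consecutive zeros between ones is always an element of $S$. The entropy of a shift $X$ is $h(X)=\lim_n\frac1n\log|\mathcal{B}_n(X)|$, where $\mathcal{B}_n(X)$ is the set of words of length $n$ occurring in points of $X$ and $\log$ is to base $2$. $X$ has the specification property if there is $N\ge1$ such that for all $u,v\in\mathcal{B}(X)=\bigcup_n\mathcal{B}_n(X)$ there exists $w\in\mathcal{B}_N(X)$ with $uwv\in\mathcal{B}(X)$. *)

(* Defs.v *)
From HB Require Import structures.
From mathcomp Require Import all_boot all_order all_algebra.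
From mathcomp Require Import boolp classical_sets reals topology normedtype sequences exp.
Set Implicit Arguments. Unset Strict Implicit. Unset Printing Implicit Defensive.
Import Order.TTheory GRing.Theory Num.Theory.
Import numFieldNormedType.Exports.
Local Open Scope ring_scope.
Local Open Scope classical_set_scope.

Definition point := int -> bool.

Definition gap_shift (S : set nat) : set point :=
  fun x => forall i j : int, i < j -> x i -> x j ->
    (forall k : int, i < k < j -> ~~ x k) -> S (absz (j - i - 1)%R).

Definition occurs (w : seq bool) (x : point) : Prop :=
  exists i : int, forall k : nat, (k < size w)%N -> x (i + k%:Z) = nth false w k.

Definition in_lang (X : set point) (w : seq bool) : Prop :=
  exists x, X x /\ occurs w x.

Definition blocks (X : set point) (n : nat) : {set n.-tuple bool} :=
  [set w : n.-tuple bool | `[< in_lang X (tval w) >]].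

Definition has_entropy (R : realType) (X : set point) (h : R) : Prop :=
  (fun n : nat => ln (#|blocks X n|%:R : R) / ln 2 / n%:R) @ \oo --> h.

Definition specification (X : set point) : Prop :=
  exists N : nat, (1 <= N)%N /\
    forall u v, in_lang X u -> in_lang X v ->
      exists w, size w = N /\ in_lang X w /\ in_lang X (u ++ w ++ v).

(* Main.v *)
Require Import Defs.
From HB Require Import structures.
From mathcomp Require Import all_boot all_order all_algebra.
From mathcomp Require Import boolp classical_sets reals topology normedtype sequences exp.
From mathcomp Require Import zify ring lra.
Import Order.TTheory GRing.Theory Num.Theory.
Import numFieldNormedType.Exports.
Section Comb.
Variable sb : pred nat.

Fixpoint okr (st : option nat) (w : seq bool) : bool :=
  match w with
  | [::] => true
  | false :: w' => okr (omap succn st) w'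
  | true :: w' => (if st is Some t then sb t else true) && okr (Some 0) w'
  end.

Fixpoint fin (st : option nat) (w : seq bool) : option nat :=
  match w with
  | [::] => st
  | false :: w' => fin (omap succn st) w'
  | true :: w' => fin (Some 0) w'
  end.

Lemma okr_cat st a b : okr st (a ++ b) = okr st a && okr (fin st a) b.
Proof.
elim: a st => [|[] a IH] st //=; first by rewrite IH andbA.
Qed.

Lemma okr_nseq st m : okr st (nseq m false).
Proof. by elim: m st => [|m IH] st //=. Qed.

Lemma fin_nseq t m : fin (Some t) (nseq m false) = Some (m + t).
Proof. by elim: m t => [|m IH] t //=; rewrite IH addnS. Qed.

Lemma fin_nseqN m : fin None (nseq m false) = None.
Proof. by elim: m. Qed.

Lemma okr_weaken t w : okr (Some t) w -> okr None w.
Proof.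
elim: w t => [|[] w IH] t //=; first by case/andP.
move=> h. move: (IH _ h). done.
Qed.
Lemma okr_gap w : forall st, okr st w ->
 (forall b, b < size w -> nth false w b -> (forall c, c < b -> ~~ nth false w c) ->
    forall t, st = Some t -> sb (t + b))
 /\ (forall a b, a < b -> b < size w -> nth false w a -> nth false w b ->
    (forall c, a < c < b -> ~~ nth false w c) -> sb (b - a - 1)).
Proof.
elim: w => [|e w IH] st //=.
have H : okr st (e :: w) -> okr (if e then Some 0 else omap succn st) w.
  by case: e => //= /andP[].
move=> hok; have [IH1 IH2] := IH _ (H hok).
split.
- case=> [|b] //= hb he hz t ht.
    by move: hok; rewrite he ht /= addn0 => /andP[].
  have ef : e = false by apply/negbTE; exact: (hz 0%N).
  move: IH1; rewrite ef ht /= => IH1.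
  rewrite addnS -addSn; apply: (IH1 b) => // c hc; apply: (hz c.+1); done.
- case=> [|a] [|b] //= hab hb ha hbb hz.
    have et : e = true by [].
    move: IH1; rewrite et => IH1.
    have -> : (b.+1 - 0 - 1 = 0 + b)%N by lia.
    apply: (IH1 b) => // c hc.
    by apply: (hz c.+1).
  rewrite subSS; apply: IH2 => // c /andP[h1 h2]; apply: (hz c.+1).
  by rewrite ltnS h1 ltnS h2.
Qed.
Definition cons_st (x : int -> bool) (i0 : int) (st : option nat) : Prop :=
  if st is Some t then x (i0 - (t.+1)%:Z)%R /\
     forall m, m < t -> x (i0 - (m.+1)%:Z)%R = false
  else True.

Lemma ok_of_point (x : int -> bool) : gap_shift (fun u => sb u) x ->
  forall w i0 st, (forall k, k < size w -> x (i0 + k%:Z)%R = nth false w k) ->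
  cons_st x i0 st -> okr st w.
Proof.
move=> hx; elim=> [|e w IH] i0 st //= hw hc.
have x0 : x i0 = e by move: (hw 0%N isT); rewrite addr0.
have hw' : forall k, k < size w -> x ((i0 + 1) + k%:Z)%R = nth false w k.
  move=> k hk; have := hw k.+1 hk => /= <-; congr x; lia.
case: e x0 hw => x0 _.
- apply/andP; split; last first.
    apply: IH hw' _ => /=; split; first by rewrite (_ : (i0 + 1 - 1 = i0)%R) //; lia.
    by [].
  case: st hc => [t [h1 h2]|] //.
  have := hx (i0 - (t.+1)%:Z)%R i0 _ h1 x0.
  have -> : absz (i0 - (i0 - (t.+1)%:Z) - 1)%R = t by lia.
  apply; first by lia.
  move=> k /andP[k1 k2].
  have -> : k = (i0 - (absz (i0 - k)%R).-1.+1%:Z)%R by lia.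
  rewrite h2 //; lia.
- apply: IH hw' _.
  case: st hc => [t [h1 h2]|] //=; split.
    by rewrite (_ : (i0 + 1 - (t.+2)%:Z = i0 - (t.+1)%:Z)%R) //; lia.
  case=> [|m] hm; first by rewrite (_ : (i0 + 1 - 1 = i0)%R) //; lia.
  by rewrite (_ : (i0 + 1 - (m.+2)%:Z = i0 - (m.+1)%:Z)%R) ?h2 //; lia.
Qed.

Definition pt (w : seq bool) : int -> bool := fun i =>
  [&& (0 <= i)%R, (i < (size w)%:Z)%R & nth false w (absz i)].

Lemma lang_ok w : in_lang (gap_shift (fun u => sb u)) w <-> okr None w.
Proof.
split.
  move=> [x [hx [i0 hi]]]; exact: (@ok_of_point x hx w i0 None hi I).
move=> hok; exists (pt w); split; last first.
  exists 0%R => k hk.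
  have h1 : (0 <= k%:Z)%R by lia.
  have h2 : (k%:Z < (size w)%:Z)%R by lia.
  by rewrite /pt add0r h1 h2.
move=> i j hij /and3P[i0 isz ni] /and3P[j0 jsz nj] hz.
have [_ G] := @okr_gap w None hok.
have -> : absz (j - i - 1)%R = (absz j - absz i - 1)%N by lia.
apply: G => //; try lia.
move=> c /andP[c1 c2]; move: (hz (Posz c)).
have h1 : (0 <= c%:Z)%R by lia.
have h2 : (c%:Z < (size w)%:Z)%R by lia.
rewrite /pt h1 h2 /=; apply; lia.
Qed.
Fixpoint bseqs n : seq (seq bool) :=
  if n is m.+1 then [seq true :: s | s <- bseqs m] ++ [seq false :: s | s <- bseqs m]
  else [:: [::]].

Lemma mem_bseqs n s : (s \in bseqs n) = (size s == n).
Proof.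
have injT (c : bool) : injective (cons c) by move=> a a' [].
elim: n s => [|n IH] [|b s] //=.
  by rewrite mem_cat; apply/negP => /orP[] /mapP [].
rewrite mem_cat /= eqSS; case: b.
  rewrite (mem_map (injT true)) IH.
  have -> : (true :: s \in [seq false :: s0 | s0 <- bseqs n]) = false.
    by apply/mapP => [[y _]].
  by rewrite orbF.
rewrite (mem_map (injT false)) IH.
have -> : (false :: s \in [seq true :: s0 | s0 <- bseqs n]) = false.
  by apply/mapP => [[y _]].
by [].
Qed.

Lemma uniq_bseqs n : uniq (bseqs n).
Proof.
have injT (c : bool) : injective (cons c) by move=> a a' [].
elim: n => //= n IH; rewrite cat_uniq !map_inj_uniq // IH /=.
rewrite andbT; apply/hasPn => s /mapP [y _ ->]; apply/mapP => [[z _]]; done.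
Qed.

Lemma card_count n (P : pred (seq bool)) :
  #|[set w : n.-tuple bool | P (tval w)]| = count P (bseqs n).
Proof.
rewrite cardsE cardE /enum_mem size_filter -enumT.
transitivity (count P (map val (enum {: n.-tuple bool}))).
  by rewrite enumT [RHS]count_map; apply: eq_count => x /=; rewrite unfold_in.
have /permP -> // : perm_eq (map val (enum {: n.-tuple bool})) (bseqs n).
apply: uniq_perm (uniq_bseqs n) _.
  by rewrite map_inj_uniq ?enum_uniq //; exact: val_inj.
move=> s; rewrite mem_bseqs; apply/mapP/idP => [[t _ ->]|/eqP hs].
  by rewrite size_tuple.
by exists (Tuple (introT eqP hs)) => //; rewrite mem_enum.
Qed.

Definition Kc t n := count (okr (Some t)) (bseqs n).
Definition Hc n := count (okr None) (bseqs n).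

Lemma count_bseqsS n (P : pred (seq bool)) :
  count P (bseqs n.+1) = count (fun s => P (true :: s)) (bseqs n) + count (fun s => P (false :: s)) (bseqs n).
Proof. by rewrite /= count_cat !count_map. Qed.

Lemma HcS n : Hc n.+1 = Kc 0 n + Hc n.
Proof. by rewrite /Hc count_bseqsS. Qed.

Lemma KcS t n : Kc t n.+1 = (if sb t then Kc 0 n else 0) + Kc t.+1 n.
Proof.
rewrite /Kc count_bseqsS /=; congr (_ + _).
by case: (sb t) => //=; rewrite count_pred0.
Qed.

Lemma Kc0 t : Kc t 0 = 1. Proof. by []. Qed.
Lemma Hc0 : Hc 0 = 1. Proof. by []. Qed.
Lemma split_v (v : seq bool) :
  (exists b v', v = nseq b false ++ true :: v') \/ v = nseq (size v) false.
Proof.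
elim: v => [|[] v IH]; [by right|by left; exists 0, v|].
case: IH => [[b [v' ->]]|h]; first by left; exists b.+1, v'.
by right => /=; rewrite {1}h.
Qed.

Lemma fin_cat st a b : fin st (a ++ b) = fin (fin st a) b.
Proof. by elim: a st => [|[] a IH] st //=. Qed.

Definition blk (s : nat) := nseq s false ++ [:: true].

Lemma blk_fin st s : fin st (blk s) = Some 0.
Proof. by rewrite /blk fin_cat. Qed.

Lemma blk_ok s : okr (Some 0) (blk s) = sb s.
Proof. by rewrite /blk okr_cat okr_nseq fin_nseq /= addn0 andbT. Qed.

Lemma blocks_ok ss : all sb ss ->
  okr (Some 0) (flatten (map blk ss)) /\ fin (Some 0) (flatten (map blk ss)) = Some 0.
Proof.
elim: ss => [|s ss IH] //= /andP[hs hss].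
have [h1 h2] := IH hss.
by rewrite okr_cat blk_ok blk_fin hs h1 fin_cat blk_fin h2.
Qed.

Lemma size_blocks ss : size (flatten (map blk ss)) = sumn (map succn ss).
Proof. by elim: ss => //= s ss IH; rewrite size_cat IH /blk size_cat size_nseq addn1. Qed.

Lemma sumn_nseqS m x : sumn (map succn (nseq m x)) = m * x.+1.
Proof. by elim: m => //= m ->; rewrite mulSn. Qed.

Lemma repr2 t M : 0 < t -> t * t <= M -> exists a b, M = a * t + b * t.+1.
Proof.
move=> t0 hM.
have hq : t <= M %/ t by rewrite leq_divRL.
have hr : M %% t < t by rewrite ltn_mod.
exists (M %/ t - M %% t), (M %% t).
have := divn_eq M t; nia.
Qed.

Lemma spec_list (j K : nat) : sb j -> sb j.+1 ->
  (forall a, exists2 p, p < K & sb (a + p)) ->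
  forall u v, okr None u -> okr None v ->
  exists w, size w = (K + K + j.+2 * j.+2) /\ okr None w /\ okr None (u ++ w ++ v).
Proof.
move=> sj sj1 gaps u v hu hv.
set N := (K + K + j.+2 * j.+2).
have zeros : (fin None u = None) \/ (v = nseq (size v) false) ->
   exists w, size w = N /\ okr None w /\ okr None (u ++ w ++ v).
  move=> H; exists (nseq N false); split; first by rewrite size_nseq.
  split; first exact: okr_nseq.
  rewrite okr_cat hu /= okr_cat okr_nseq /=.
  case: H => [-> | ->]; last by rewrite okr_nseq.
  by rewrite fin_nseqN.
case ef: (fin None u) => [a|]; last by apply: zeros; left.
case: (split_v v) => [[b [v' ev]]|]; last by move=> h; apply: zeros; right.
have hv' : okr (Some 0) v'.
  by move: hv; rewrite ev okr_cat okr_nseq fin_nseqN.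
have [p1 p1K sp1] := gaps a.
have [p2 p2K sp2] := gaps b.
have [al [be hM]] := @repr2 j.+1 (N - 1 - p1 - p2) isT ltac:(rewrite /N; lia).
set ss := nseq al j ++ nseq be j.+1.
have hss : all sb ss.
  by rewrite all_cat; apply/andP; split; apply/allP => x; rewrite mem_nseq => /andP[_ /eqP ->].
have [hF1 hF2] := @blocks_ok ss hss.
set F := flatten (map blk ss).
have sF : size F = N - 1 - p1 - p2.
  by rewrite size_blocks map_cat sumn_cat !sumn_nseqS hM.
have hwv : okr (Some a) ((nseq p1 false ++ true :: (F ++ nseq p2 false)) ++ v).
  rewrite ev -catA cat_cons okr_cat okr_nseq fin_nseq /= addnC sp1 /=.
  rewrite -catA okr_cat hF1 hF2 okr_cat okr_nseq fin_nseq okr_cat okr_nseq fin_nseq /=.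
  by rewrite addn0 sp2.
exists (nseq p1 false ++ true :: (F ++ nseq p2 false)); split.
  rewrite size_cat /= size_cat !size_nseq sF /N; lia.
move: hwv; rewrite okr_cat => /andP[hw1 hw2]; split.
  exact: okr_weaken hw1.
by rewrite okr_cat hu ef okr_cat hw1.
Qed.
Section Real.
Variable R : realType.
Local Open Scope ring_scope.

Lemma Kc_closed t n : (Kc t n)%:R =
  1 + \sum_(u < n) (if sb (t + u)%N then (Kc 0 (n - u.+1)%N)%:R else 0) :> R.
Proof.
elim: n t => [|n IH] t; first by rewrite big_ord0 addr0.
rewrite KcS natrD IH big_ord_recl /= addrCA; congr (_ + _).
congr (_ + _); first by rewrite addn0 subSS subn0; case: (sb t).
apply: eq_bigr => u _.
by rewrite /bump /= add1n addnS subSS.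
Qed.

Definition g (y : R) (u : nat) := if sb u then y ^+ u.+1 else 0.

Lemma g_ge0 y u : 0 <= y -> 0 <= g y u.
Proof. by move=> y0; rewrite /g; case: (sb u) => //; exact: exprn_ge0. Qed.

Lemma sum_mono (f : nat -> R) m n : (forall u, 0 <= f u) -> (m <= n)%N ->
  \sum_(u < m) f u <= \sum_(u < n) f u.
Proof.
move=> f0 /subnK <-; elim: (n - m)%N => [|d IH]; first by rewrite add0n.
by rewrite addSn big_ord_recr /=; apply: le_trans IH _; rewrite lerDl f0.
Qed.

Lemma Kc_ge1 n : 1 <= (Kc 0 n)%:R :> R.
Proof.
rewrite Kc_closed lerDl sumr_ge0 // => u _; case: (sb _) => //.
Qed.

Lemma Kc_rec_term n y (u : 'I_n) : 
  (if sb u then (Kc 0 (n - u.+1)%N)%:R else 0) * y ^+ n =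
  (if sb u then (Kc 0 (n - u.+1)%N)%:R * y ^+ (n - u.+1)%N else 0) * (if sb u then y ^+ u.+1 else 0) :> R.
Proof.
case: (sb u); last by rewrite !mul0r.
by rewrite -mulrA -exprD subnK.
Qed.

Variable r : R.
Hypothesis r0 : 0 < r.
Hypothesis r1 : r <= 1.
Hypothesis hsum : forall n, \sum_(u < n) g r u <= 1.
Hypothesis hlim : forall e, 0 < e -> exists n, 1 - e <= \sum_(u < n) g r u.

Lemma Kc_upper y : 0 < y -> y < r ->
  exists2 C, 0 <= C & forall n, (Kc 0 n)%:R * y ^+ n <= C.
Proof.
move=> y0 yr.
set th := y / r.
have th0 : 0 <= th by rewrite divr_ge0 // ltW.
have th1 : th < 1 by rewrite ltr_pdivrMr // mul1r.
have gth u : g y u <= th * g r u.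
  rewrite /g; case: (sb u); last by rewrite mulr0.
  have -> : y = th * r by rewrite /th divfK // gt_eqF.
  rewrite exprMn ler_pM2r; last by rewrite exprn_gt0.
  by rewrite exprS ler_piMr // exprn_ile1 // ltW.
exists (1 - th)^-1; first by rewrite invr_ge0 subr_ge0 ltW.
elim/ltn_ind => n IH.
rewrite Kc_closed mulrDl mul1r big_distrl /=.
have -> : \sum_(u < n) (if sb (0 + u)%N then (Kc 0 (n - u.+1)%N)%:R else 0) * y ^+ n =
   \sum_(u < n) (if sb u then (Kc 0 (n - u.+1)%N)%:R * y ^+ (n - u.+1)%N else 0) * g y u.
  by apply: eq_bigr => u _; rewrite add0n Kc_rec_term.
apply: (@le_trans _ _ (1 + (1 - th)^-1 * \sum_(u < n) g y u)).
  apply: lerD; first by apply: exprn_ile1; [exact: ltW | exact: le_trans (ltW yr) r1].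
  rewrite mulr_sumr; apply: ler_sum => u _.
  apply: ler_wpM2r; first exact: g_ge0 (ltW y0).
  case: (sb u); last by rewrite invr_ge0 subr_ge0 ltW.
  by apply: IH; have := ltn_ord u; lia.
have hs : \sum_(u < n) g y u <= th.
  have : \sum_(u < n) g y u <= \sum_(u < n) th * g r u.
    by apply: ler_sum => u _; exact: gth.
  move/le_trans; apply.
  by rewrite -mulr_sumr ler_piMr // hsum.
apply: (@le_trans _ _ (1 + (1 - th)^-1 * th)).
  by rewrite lerD2l ler_wpM2l // invr_ge0 subr_ge0 ltW.
have h1 : 1 - th != 0 by rewrite subr_eq0 eq_sym lt_eqF.
rewrite le_eqVlt; apply/orP; left; apply/eqP.
by field.
Qed.
Lemma Kc_expand n y : (Kc 0 n)%:R * y ^+ n = y ^+ n +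
   \sum_(u < n) (if sb u then (Kc 0 (n - u.+1)%N)%:R * y ^+ (n - u.+1)%N else 0) * g y u :> R.
Proof.
rewrite Kc_closed mulrDl mul1r big_distrl /=; congr (_ + _).
by apply: eq_bigr => u _; rewrite add0n Kc_rec_term.
Qed.

Lemma Kc_lower y : r < y -> y <= 1 -> exists K0, forall n, y ^+ K0 <= (Kc 0 n)%:R * y ^+ n.
Proof.
move=> ry y1.
have y0 : 0 < y by apply: lt_trans ry.
set th := y / r.
have th1 : 1 <= th by rewrite ler_pdivlMr // mul1r ltW.
have gth u : th * g r u <= g y u.
  rewrite /g; case: (sb u); last by rewrite mulr0.
  have -> : y = th * r by rewrite /th divfK // gt_eqF.
  rewrite exprMn ler_pM2r; last by rewrite exprn_gt0.
  by rewrite exprS ler_peMr ?exprn_ege1 // (le_trans _ th1).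
have [n0 hn0] := @hlim (1 - r / y) ltac:(by rewrite subr_gt0 ltr_pdivrMr // mul1r).
have hs : 1 <= \sum_(u < n0) g y u.
  have : \sum_(u < n0) th * g r u <= \sum_(u < n0) g y u.
    by apply: ler_sum => u _; exact: gth.
  apply: le_trans; rewrite -mulr_sumr.
  apply: le_trans (ler_wpM2l (le_trans _ th1) hn0) => //.
  rewrite opprB addrCA subrr addr0 /th.
  rewrite le_eqVlt; apply/orP; left; apply/eqP; field.
  by rewrite !gt_eqF.
exists n0; elim/ltn_ind => n IH.
have y0' : 0 <= y by apply: ltW.
case: (ltnP n n0) => hn.
  apply: (@le_trans _ _ (y ^+ n)); first by apply: ler_wiXn2l => //; apply: ltnW.
  by rewrite ler_peMl ?exprn_ge0 // Kc_ge1.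
rewrite Kc_expand.
apply: (@le_trans _ _ (\sum_(u < n) y ^+ n0 * g y u)).
  rewrite -mulr_sumr; apply: (@le_trans _ _ (y ^+ n0 * \sum_(u < n0) g y u)).
    by rewrite ler_peMr ?exprn_ge0.
  apply: ler_wpM2l; first exact: exprn_ge0.
  by apply: sum_mono => // u; exact: g_ge0.
rewrite addrC; apply: le_trans (_ : _ <= \sum_(u < n) (if sb u then (Kc 0 (n - u.+1)%N)%:R * y ^+ (n - u.+1)%N else 0) * g y u) _; last by rewrite lerDl exprn_ge0.
apply: ler_sum => u _; rewrite /g; case: (sb u); last by rewrite !mulr0.
apply: ler_wpM2r; first exact: exprn_ge0.
apply: IH; have := ltn_ord u; lia.
Qed.
Lemma Hc_upper y : 0 < y -> y < r -> exists D, forall n, (Hc n)%:R * y ^+ n <= D.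
Proof.
move=> y0 yr.
have y1 : y < 1 by apply: lt_le_trans yr r1.
have [C C0 hC] := @Kc_upper y y0 yr.
set D := 1 + C * (1 - y)^-1.
have hD : D * (1 - y) = (1 - y) + C.
  rewrite /D mulrDl mul1r -mulrA mulVf ?mulr1 //.
  by rewrite subr_eq0 eq_sym lt_eqF.
exists D; elim=> [|n IH].
  rewrite Hc0 expr0 mulr1 /D lerDl mulr_ge0 // invr_ge0 subr_ge0 ltW //.
rewrite HcS natrD exprSr.
have a1 := hC n.
set a := (Kc 0 n)%:R * y ^+ n in a1.
set b := (Hc n)%:R * y ^+ n in IH.
have -> : ((Kc 0 n)%:R + (Hc n)%:R) * (y ^+ n * y) = y * a + y * b.
  by rewrite /a /b; ring.
have ya : y * a <= y * C by rewrite ler_wpM2l // ltW.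
have yb : y * b <= y * D by rewrite ler_wpM2l // ltW.
nra.
Qed.

Lemma Hc_lower y : r < y -> y <= 1 -> exists K1, forall n, y ^+ K1 <= (Hc n)%:R * y ^+ n.
Proof.
move=> ry y1.
have y0 : 0 <= y by apply: ltW; apply: lt_trans ry.
have [K0 hK] := @Kc_lower y ry y1.
exists K0.+1; case=> [|n].
  by rewrite Hc0 expr0 mulr1 exprn_ile1.
rewrite HcS natrD exprSr exprSr mulrA.
apply: ler_wpM2r => //.
apply: le_trans (hK n) _.
by rewrite mulrDl lerDl mulr_ge0 ?exprn_ge0.
Qed.
End Real.
End Comb.
Local Open Scope ring_scope.
Lemma pow_small (R : realType) (x e : R) : 0 <= x -> x < 1 -> 0 < e -> exists m, x ^+ m < e.
Proof.
move=> x0 x1 e0.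
have : `|x| < 1 by rewrite ger0_norm.
move=> /cvg_expr /cvgrPdist_lt /(_ e e0) [N _ hN].
exists N; have := hN N (leqnn N).
by rewrite sub0r normrN ger0_norm ?exprn_ge0.
Qed.

Section Cons.
Variable R : realType.
Local Open Scope ring_scope.
Variable r : R.
Hypothesis rh : 1 / 2 < r.
Hypothesis r1 : r < 1.
Variable j : nat.
Hypothesis hj1 : 1 - r <= r ^+ j.+1.
Hypothesis hj2 : r ^+ j.+1 * (1 + r) < 1.

Let r0 : 0 < r. Proof. by apply: lt_trans rh; rewrite divr_gt0. Qed.

Let rh2 : 1 < 2 * r.
Proof. by move: rh; rewrite ltr_pdivrMr // mulrC. Qed.

Let hj2' : r ^+ j.+1 + r ^+ j.+1 * r < 1.
Proof. by move: hj2; rewrite mulrDr mulr1. Qed.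

Definition rho0 := (1 - r ^+ j.+1 - r ^+ j.+2) * (1 - r) / r ^+ j.+3.

Fixpoint rho (m : nat) : R :=
  if m is m'.+1 then (if rho m' <= r then rho m' / r else (rho m' - (1 - r)) / r)
  else rho0.

Definition sbc (u : nat) : bool :=
  [|| u == j, u == j.+1 | (j.+2 <= u)%N && (r < rho (u - j.+2))].

Lemma sbc_hi m : sbc (j.+2 + m) = (r < rho m).
Proof.
rewrite /sbc leq_addr /= addKn.
have -> : (j.+2 + m == j) = false by apply/eqP; lia.
by have -> : (j.+2 + m == j.+1) = false by apply/eqP; lia.
Qed.

Lemma sbc_lo u : (u < j)%N -> sbc u = false.
Proof.
move=> h; rewrite /sbc.
have -> : (u == j) = false by apply/eqP; lia.
have -> : (u == j.+1) = false by apply/eqP; lia.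
by have -> : (j.+2 <= u)%N = false by lia.
Qed.

Lemma rho0_bounds : 0 < rho0 <= 1.
Proof.
have h2 := hj2'; have h1 := hj1; have hr2 := rh2; have hr0 := r0.
rewrite /rho0 (exprSr r j.+2) (exprSr r j.+1).
set x := r ^+ j.+1 in h1 h2 *.
have x0 : 0 < x by rewrite exprn_gt0.
have xr0 : 0 < x * r * r by rewrite !mulr_gt0.
apply/andP; split.
  by rewrite divr_gt0 // mulr_gt0 // subr_gt0 //; lra.
rewrite ler_pdivrMr // mul1r.
nra.
Qed.

Definition dl := rho0 * ((2 * r - 1) / r).

Lemma dl_gt0 : 0 < dl.
Proof.
have hr2 := rh2; have hr0 := r0.
have [h _] := andP rho0_bounds.
by rewrite /dl mulr_gt0 // divr_gt0 //; lra.
Qed.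

Lemma rho_bounds m : dl <= rho m <= 1.
Proof.
have hr2 := rh2; have hr0 := r0.
have [h0 h1] := andP rho0_bounds.
have q1 : (2 * r - 1) / r <= 1 by rewrite ler_pdivrMr // mul1r; have := r1; lra.
have q0 : 0 <= (2 * r - 1) / r by rewrite divr_ge0 //; lra.
elim: m => [|m /andP [IH1 IH2]] /=.
  by rewrite h1 andbT /dl ler_piMr // ltW.
have rm0 : 0 < rho m by apply: lt_le_trans dl_gt0 IH1.
case: ifP => hr.
  rewrite ler_pdivrMr // mul1r hr andbT ler_pdivlMr //.
  by apply: (le_trans _ IH1); rewrite ger_pMr ?dl_gt0 // ltW.
  move/negbT: hr; rewrite -ltNge => hr.
apply/andP; split; last by rewrite ler_pdivrMr // mul1r; lra.
apply: (@le_trans _ _ ((2 * r - 1) / r)).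
  by rewrite /dl ler_piMl.
by rewrite ler_pM2r ?invr_gt0 //; lra.
Qed.

Lemma psum m : \sum_(u < j.+2 + m) g sbc R r u = 1 - rho m * r ^+ (j.+2 + m).+1 / (1 - r).
Proof.
have r1' : 1 - r != 0 by rewrite subr_eq0 eq_sym lt_eqF // r1.
elim: m => [|m IH].
  rewrite addn0 !big_ord_recr /=.
  have -> : \sum_(i < j) g sbc R r i = 0.
    by apply: big1 => u _; rewrite /g sbc_lo.
  have -> : g sbc R r j = r ^+ j.+1 by rewrite /g /sbc eqxx.
  have -> : g sbc R r j.+1 = r ^+ j.+2 by rewrite /g /sbc eqxx orbT.
  rewrite add0r /rho0; field.
  by rewrite r1' expf_neq0 // gt_eqF.
rewrite addnS big_ord_recr /= IH /g sbc_hi /=.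
case: ifP => hr.
  have -> : (rho m <= r) = false by rewrite leNgt hr.
  rewrite !exprS; field.
  by rewrite r1' gt_eqF.
have -> : (rho m <= r) = true by rewrite leNgt hr.
rewrite addr0 !exprS; field.
by rewrite r1' gt_eqF.
Qed.

Lemma g_ge0' u : 0 <= g sbc R r u.
Proof. by apply: g_ge0; apply: ltW. Qed.

Lemma hsum_c n : \sum_(u < n) g sbc R r u <= 1.
Proof.
have h1 := @sum_mono R (g sbc R r) n (j.+2 + n) g_ge0' (leq_addl _ _).
apply: le_trans h1 _.
rewrite psum lerBlDr lerDl.
have [h _] := andP (rho_bounds n).
have hr0 : 0 <= rho n := ltW (lt_le_trans dl_gt0 h).
apply: mulr_ge0; first by apply: mulr_ge0 => //; exact: exprn_ge0 (ltW r0).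
by rewrite invr_ge0 subr_ge0 ltW.
Qed.

Lemma hlim_c e : 0 < e -> exists n, 1 - e <= \sum_(u < n) g sbc R r u.
Proof.
move=> e0.
have hr1 := r1.
have [m hm] := @pow_small R r (e * (1 - r)) (ltW r0) r1 ltac:(by rewrite mulr_gt0 // subr_gt0).
exists (j.+2 + m)%N; rewrite psum lerD2l lerN2.
have [_ h] := andP (rho_bounds m).
rewrite ler_pdivrMr ?subr_gt0 //.
apply: (@le_trans _ _ (r ^+ (j.+2 + m).+1)).
  by rewrite ler_piMl ?exprn_ge0 // ltW.
apply: (le_trans _ (ltW hm)).
by apply: ler_wiXn2l; [exact: ltW|exact: ltW|lia].
Qed.

Lemma excl m p : (forall i, (i < p)%N -> rho (m + i) <= r) -> rho (m + p) * r ^+ p = rho m.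
Proof.
elim: p => [|p IH] h; first by rewrite addn0 expr0 mulr1.
rewrite addnS /= h // exprS mulrA divfK ?gt_eqF //.
by rewrite IH // => i hi; apply: h; lia.
Qed.

Lemma gaps_c : exists K, forall a, exists2 p, (p < K)%N & sbc (a + p).
Proof.
have [L hL] := @pow_small R r dl (ltW r0) r1 dl_gt0.
have key : forall m, exists2 p, (p <= L)%N & r < rho (m + p).
  move=> m; have [//|H] := pselect (exists2 p, (p <= L)%N & r < rho (m + p)).
  have hle : forall i, (i < L)%N -> rho (m + i) <= r.
    move=> i hi; rewrite leNgt; apply/negP => hr; apply: H; exists i => //; exact: ltnW.
  have e := @excl m L hle.
  have [h1 h2] := andP (rho_bounds m).
  have [_ h3] := andP (rho_bounds (m + L)).
  have : rho (m + L) * r ^+ L <= r ^+ L by rewrite ler_piMl ?exprn_ge0 // ltW.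
  rewrite e => h4.
  have := lt_le_trans hL h1; rewrite ltNge; move/negP; case.
  exact: h4.
exists (j.+2 + L).+1 => a.
case: (leqP a j.+2) => ha.
  have [p hp hr] := key 0%N.
  exists (j.+2 - a + p)%N; first lia.
  have -> : (a + (j.+2 - a + p) = j.+2 + (0 + p))%N by lia.
  by rewrite sbc_hi.
have [p hp hr] := key (a - j.+2)%N.
exists p; first lia.
have -> : (a + p = j.+2 + (a - j.+2 + p))%N by lia.
by rewrite sbc_hi.
Qed.
End Cons.
Local Open Scope classical_set_scope.
Lemma ev_cvg (R : realType) (f : nat -> R) (l : R) :
  (forall e, 0 < e -> exists N, forall n, (N <= n)%N -> `|l - f n| < e) -> f @ \oo --> l.
Proof.
move=> h; apply/cvgrPdist_lt => e e0.
have [N hN] := h e e0.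
by exists N.
Qed.

Lemma lim_abs (R : realType) (q : R) (a : nat -> R) : 0 < q ->
  (forall d, 0 < d -> d < q ->
     (exists A, forall n, a n <= A + n%:R * (q + d)) /\
     (exists B, forall n, n%:R * (q - d) - B <= a n)) ->
  (fun n => a n / n%:R) @ \oo --> q.
Proof.
move=> q0 H; apply: ev_cvg => e e0.
set d := Num.min e q / 2.
have m0 : 0 < Num.min e q by rewrite lt_min e0 q0.
have d0 : 0 < d by rewrite /d divr_gt0.
have de : d + d <= e.
  have : Num.min e q <= e by rewrite ge_min lexx.
  by rewrite /d; lra.
have dq : d < q.
  have : Num.min e q <= q by rewrite ge_min lexx orbT.
  by rewrite /d; lra.
have [[A hA] [B hB]] := H d d0 dq.
exists (Num.truncn ((`|A| + `|B|) / d)).+1 => n hn.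
have hN := truncnS_gt ((`|A| + `|B|) / d).
have hn' : ((Num.truncn ((`|A| + `|B|) / d)).+1%:R <= n%:R :> R) by rewrite ler_nat.
have hnd : `|A| + `|B| < n%:R * d.
  by rewrite -ltr_pdivrMr //; apply: lt_le_trans hN hn'.
have nd0 : 0 < n%:R * d by apply: le_lt_trans hnd; rewrite addr_ge0.
have n0 : 0 < n%:R :> R by nra.
have hA1 : A <= `|A| := ler_norm A.
have hB1 : - `|B| <= - B by rewrite lerN2 ler_norm.
have hB0 : 0 <= `|B| := normr_ge0 B.
have hA0 : 0 <= `|A| := normr_ge0 A.
have up : a n < n%:R * (q + e).
  have := hA n; nra.
have lo : n%:R * (q - e) < a n.
  have := hB n; nra.
set t := a n / n%:R.
have ht : a n = t * n%:R by rewrite /t divfK // gt_eqF.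
rewrite ht in up lo.
rewrite ltr_norml; apply/andP; split; nra.
Qed.
Lemma exists_j (R : realType) (r : R) : 1 / 2 < r -> r < 1 ->
  exists j, 1 - r <= r ^+ j.+1 /\ r ^+ j.+1 * (1 + r) < 1.
Proof.
move=> rh r1.
have r0 : 0 < r by apply: lt_trans rh; rewrite divr_gt0.
have rh2 : 1 < 2 * r by move: rh; rewrite ltr_pdivrMr // mulrC.
have [n0 hn0] := @pow_small R r (1 - r) (ltW r0) r1 ltac:(by rewrite subr_gt0).
have step : forall n, ~~ (1 - r <= r ^+ n.+1) ->
    exists j, (1 - r <= r ^+ j.+1) /\ ~~ (1 - r <= r ^+ j.+2).
  elim=> [|n IH] hn.
    by move: hn; rewrite expr1 => /negP; case; lra.
  case: (boolP (1 - r <= r ^+ n.+1)) => h; first by exists n.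
  exact: IH.
have [j [h1 h2]] : exists j, (1 - r <= r ^+ j.+1) /\ ~~ (1 - r <= r ^+ j.+2).
  apply: (step n0); rewrite -ltNge; apply: le_lt_trans hn0.
  by rewrite exprS ler_piMl ?exprn_ge0 // ltW.
exists j; split => //.
move: h2; rewrite -ltNge exprS => h2.
set x := r ^+ j.+1 in h1 h2 *.
have x1 : x <= r by rewrite /x exprS ler_piMr ?exprn_ile1 // ltW.
nra.
Qed.

Theorem proposition4p2 (R : realType) (q : R) :
  0 < q < 1 ->
  exists S : set nat, S !=set0 /\
    specification (gap_shift S) /\ has_entropy (gap_shift S) q.
Proof.
move=> /andP[q0 q1].
have l2 : 0 < ln (2 : R) by apply: ln_gt0; rewrite ltr1n.
pose r := expR (- (q * ln 2)).
have e2 : expR (- ln 2) = 1 / 2 :> R by rewrite expRN lnK ?posrE // div1r.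
have rh : 1 / 2 < r by rewrite -e2 ltr_expR; nra.
have r1 : r < 1 by rewrite -expR0 ltr_expR; nra.
have r0 : 0 < r by apply: expR_gt0.
have [j [hj1 hj2]] := @exists_j R r rh r1.
pose sb := sbc R r j.
exists (fun u => sb u); split; first by exists j; rewrite /= /sb /sbc eqxx.
split.
  have [K hK] := @gaps_c R r rh r1 j hj1 hj2.
  exists (K + K + j.+2 * j.+2)%N; split; first lia.
  move=> u v /lang_ok hu /lang_ok hv.
  have sj : sb j by rewrite /sb /sbc eqxx.
  have sj1 : sb j.+1 by rewrite /sb /sbc eqxx orbT.
  have [w [hw1 [hw2 hw3]]] := @spec_list sb j K sj sj1 hK u v hu hv.
  by exists w; split => //; split; apply/lang_ok.
have card n : #|blocks (gap_shift (fun u => sb u)) n| = Hc sb n.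
  rewrite /blocks (card_count n (fun s => `[< in_lang (gap_shift (fun u => sb u)) s >])) /Hc; apply: eq_count => s.
  by apply/idP/idP => [/asboolP/lang_ok | /lang_ok/asboolP].
rewrite /has_entropy.
have hsum := @hsum_c R r rh r1 j hj1 hj2.
have hlim := @hlim_c R r rh r1 j hj1 hj2.
have Hge1 n : (1 <= Hc sb n)%N.
  elim: n => [|n IH]; first by rewrite Hc0.
  by rewrite HcS; apply: leq_trans IH (leq_addl _ _).
have Hpos n : 0 < (Hc sb n)%:R :> R by rewrite ltr0n; apply: Hge1.
have key (y : R) (n : nat) : 0 < y ->
    ln ((Hc sb n)%:R * y ^+ n) = ln ((Hc sb n)%:R) + n%:R * ln y.
  by move=> y0; rewrite lnM ?posrE ?exprn_gt0 // lnXn // mulr_natl.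
apply: lim_abs => // d d0 dq.
split.
  pose y1 := expR (- ((q + d) * ln 2)) : R.
  have y10 : 0 < y1 by apply: expR_gt0.
  have y1r : y1 < r by rewrite ltr_expR; nra.
  have [D hD] := @Hc_upper sb R r r0 (ltW r1) hsum y1 y10 y1r.
  exists (ln D / ln 2) => n; rewrite card.
  have hp : 0 < (Hc sb n)%:R * y1 ^+ n by rewrite mulr_gt0 ?exprn_gt0.
  have : ln ((Hc sb n)%:R * y1 ^+ n) <= ln D.
    by rewrite ler_ln // posrE (lt_le_trans hp (hD n)).
  rewrite key // expRK => h.
  rewrite ler_pdivrMr // mulrDl divfK ?gt_eqF //.
  nra.
pose y2 := expR (- ((q - d) * ln 2)) : R.
have y20 : 0 < y2 by apply: expR_gt0.
have y2r : r < y2 by rewrite ltr_expR; nra.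
have y21 : y2 <= 1 by rewrite -expR0 ler_expR; nra.
have [K1 hK1] := @Hc_lower sb R r r0 (ltW r1) hlim y2 y2r y21.
exists (K1%:R * (q - d)) => n; rewrite card.
have : ln (y2 ^+ K1) <= ln ((Hc sb n)%:R * y2 ^+ n).
  by rewrite ler_ln // posrE ?exprn_gt0 // mulr_gt0 ?exprn_gt0.
rewrite key // lnXn // expRK -mulr_natl => h.
rewrite ler_pdivlMr.
  nra.
by rewrite mulr1.
Qed.
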